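(* Let $m\ge n$. Then every instance with $n$ agents having identical monotone valuations and $m$ goods has at least $n!$ EFX allocations, and there exists an instance with $n$ agents having identical additive valuations and $m$ goods that has exactly $n!$ EFX allocations. *)

(* Defs.v *)
From mathcomp Require Import all_boot all_order all_algebra.
From mathcomp Require Export reals.
Set Implicit Arguments. Unset Strict Implicit. Unset Printing Implicit Defensive.
Import Order.TTheory GRing.Theory Num.Theory.
Local Open Scope ring_scope.

Definition monotone_valuation (R : realFieldType) (m : nat)
  (v : {set 'I_m} -> R) : Prop :=
  v set0 = 0 /\ forall S T : {set 'I_m}, S \subset T -> v S <= v T.

Definition additive_valuation (R : realFieldType) (m : nat)
  (v : {set 'I_m} -> R) : Prop :=
  exists w : 'I_m -> R, (forall g, 0 <= w g) /\
    forall S : {set 'I_m}, v S = \sum_(g in S) w g.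

Definition allocation (m n : nat) := {ffun 'I_m -> 'I_n}.

Definition bundle (m n : nat) (A : allocation m n) (i : 'I_n) : {set 'I_m} :=
  [set g | A g == i].

Definition EFXb (R : realFieldType) (m n : nat)
  (vals : 'I_n -> {set 'I_m} -> R) (A : allocation m n) : bool :=
  [forall i, forall j, forall g, (g \in bundle A j) ==>
     (vals i (bundle A j :\ g) <= vals i (bundle A i))].

Definition num_EFX (R : realFieldType) (m n : nat)
  (vals : 'I_n -> {set 'I_m} -> R) : nat :=
  #|[set A : allocation m n | EFXb vals A]|.

(* Main.v *)
Require Import Defs.
From mathcomp Require Import all_boot all_order all_algebra all_fingroup.
From mathcomp Require Import zify.
Set Implicit Arguments. Unset Strict Implicit. Unset Printing Implicit Defensive.
Import Order.TTheory GRing.Theory Num.Theory.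
Local Open Scope ring_scope.

Definition keylt (R : realType) (m : nat) (v : {set 'I_m} -> R) (S T : {set 'I_m}) : bool :=
  (v S < v T) || ((v S == v T) && (#|S| < #|T|)%N).

Lemma keylt_trans (R : realType) m (v : {set 'I_m} -> R) (S T U : {set 'I_m}) :
  keylt v S T -> keylt v T U -> keylt v S U.
Proof.
rewrite /keylt => /orP[h1|/andP[/eqP e1 c1]] /orP[h2|/andP[/eqP e2 c2]].
- by rewrite (lt_trans h1 h2).
- by rewrite -e2 h1.
- by rewrite e1 h2.
- by rewrite e1 e2 eqxx (ltn_trans c1 c2) orbT.
Qed.

Lemma keylt_irr (R : realType) m (v : {set 'I_m} -> R) (S : {set 'I_m}) : ~~ keylt v S S.
Proof. by rewrite /keylt ltxx ltnn andbF. Qed.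

Lemma keylt_sub (R : realType) m (v : {set 'I_m} -> R) (S T : {set 'I_m}) :
  monotone_valuation v -> S \subset T -> ~~ keylt v T S.
Proof.
move=> [_ hm] hST; rewrite /keylt negb_or negb_and -leNgt hm //=.
by rewrite -leqNgt subset_leq_card // orbT.
Qed.

Lemma keylt_sup (R : realType) m (v : {set 'I_m} -> R) (S T : {set 'I_m}) :
  monotone_valuation v -> S \subset T -> (#|S| < #|T|)%N -> keylt v S T.
Proof.
move=> [_ hm] hST hc; rewrite /keylt.
have := hm _ _ hST; rewrite le_eqVlt => /orP[->|->] //.
by rewrite hc orbT.
Qed.

Definition rank (R : realType) m (v : {set 'I_m} -> R) (S : {set 'I_m}) : nat :=
  #|[set T | keylt v T S]|.

Lemma rank_lt (R : realType) m (v : {set 'I_m} -> R) (S T : {set 'I_m}) :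
  keylt v S T -> (rank v S < rank v T)%N.
Proof.
move=> hST; apply: proper_card; apply/properP; split.
  by apply/subsetP => U; rewrite !inE => hU; apply: keylt_trans hU hST.
by exists S; rewrite !inE ?keylt_irr.
Qed.

Definition wt (R : realType) m (v : {set 'I_m} -> R) (S : {set 'I_m}) : nat :=
  3 ^ (#|{set 'I_m}| - rank v S).

Lemma wt_lt (R : realType) m (v : {set 'I_m} -> R) (S T : {set 'I_m}) :
  keylt v S T -> (wt v T * 3 <= wt v S)%N.
Proof.
move=> h; have h1 := rank_lt h.
have h2 : (rank v T <= #|{set 'I_m}|)%N by apply: max_card.
rewrite /wt -expnSr leq_exp2l //; lia.
Qed.

Lemma wt_pos (R : realType) m (v : {set 'I_m} -> R) (S : {set 'I_m}) : (0 < wt v S)%N.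
Proof. by rewrite /wt expn_gt0. Qed.

Definition upd m n (A : allocation m n) (g : 'I_m) (i : 'I_n) : allocation m n :=
  [ffun x => if x == g then i else A x].

Lemma bundle_upd_i m n (A : allocation m n) (g : 'I_m) (i : 'I_n) :
  bundle (upd A g i) i = g |: bundle A i.
Proof. by apply/setP => x; rewrite !inE ffunE; case: (x =P g) => [->|_]; rewrite ?eqxx. Qed.

Lemma bundle_upd_j m n (A : allocation m n) (g : 'I_m) (i j : 'I_n) :
  A g = j -> i != j -> bundle (upd A g i) j = bundle A j :\ g.
Proof.
move=> hg hij; apply/setP => x; rewrite !inE ffunE.
by case: (x =P g) => [->|_]; rewrite ?hg ?eqxx ?(negbTE hij).
Qed.

Lemma bundle_upd_k m n (A : allocation m n) (g : 'I_m) (i j k : 'I_n) :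
  A g = j -> k != i -> k != j -> bundle (upd A g i) k = bundle A k.
Proof.
move=> hg hki hkj; apply/setP => x; rewrite !inE ffunE.
case: (x =P g) => [->|_] //; rewrite hg eq_sym (negbTE hki) eq_sym.
by rewrite (negbTE hkj).
Qed.

Definition Phi (R : realType) m n (v : {set 'I_m} -> R) (A : allocation m n) : nat :=
  \sum_(k : 'I_n) wt v (bundle A k).

Lemma Phi_dec (R : realType) m n (v : {set 'I_m} -> R) (A : allocation m n) (i j : 'I_n) (g : 'I_m) :
  monotone_valuation v -> g \in bundle A j ->
  keylt v (bundle A i) (bundle A j :\ g) -> (Phi v (upd A g i) < Phi v A)%N.
Proof.
move=> hv; rewrite inE => /eqP hg hk.
have hij : i != j.
  apply/eqP => eij; move: hk; rewrite eij => hk.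
  by move: (keylt_sub hv (subD1set (bundle A j) g)); rewrite hk.
have hgi : g \notin bundle A i by rewrite inE hg eq_sym.
have k1 : keylt v (bundle A i) (g |: bundle A i).
  apply: keylt_sup => //; first exact: subsetUr.
  by rewrite cardsU1 hgi.
have w1 := wt_lt k1; have w2 := wt_lt hk; have w0 := wt_pos v (bundle A i).
have split2 : forall B : allocation m n, Phi v B =
    (wt v (bundle B i) + (wt v (bundle B j) +
     \sum_(k | (k != i) && (k != j)) wt v (bundle B k)))%N.
  move=> B; rewrite /Phi (bigD1 i) //= (bigD1 j) 1?eq_sym //=.
rewrite !split2 bundle_upd_i (bundle_upd_j hg hij).
rewrite (eq_bigr (fun k => wt v (bundle A k))); last first.
  by move=> k /andP[hki hkj]; rewrite (bundle_upd_k hg hki hkj).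
set s := \sum_(k | _) _.
lia.
Qed.

Lemma exists_good (R : realType) m n (v : {set 'I_m} -> R) (hn : (0 < n)%N) (hmn : (n <= m)%N) :
  monotone_valuation v ->
  exists A : allocation m n,
    (forall i j g, g \in bundle A j -> v (bundle A j :\ g) <= v (bundle A i)) /\
    (forall i, exists g, A g = i).
Proof.
move=> hv.
pose A0 : allocation m n := [ffun _ => Ordinal hn].
case: (@arg_minnP _ A0 xpredT (Phi v) isT) => A _ hmin.
have key : forall i j g, g \in bundle A j -> ~~ keylt v (bundle A i) (bundle A j :\ g).
  move=> i j g hg; apply/negP => hk.
  by have := hmin (upd A g i) isT; rewrite leqNgt (Phi_dec hv hg hk).
exists A; split.
  move=> i j g hg; rewrite leNgt; apply/negP => hlt.
  by move: (key i j g hg); rewrite /keylt hlt.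
move=> i; case: (boolP [exists g, A g == i]) => [/existsP[g /eqP hg]|]; first by exists g.
rewrite negb_exists => /forallP hno; exfalso.
have hXi : bundle A i = set0.
  by apply/setP => x; rewrite !inE; apply/negbTE/hno.
have hsm : forall j g, g \in bundle A j -> bundle A j :\ g = set0.
  move=> j g hg; apply/eqP; apply/negPn/negP => hne.
  have := key i j g hg; rewrite hXi; apply/negP/negPn.
  apply: keylt_sup => //; first exact: sub0set.
  by rewrite cards0 card_gt0.
have hinj : injective A.
  move=> x y hxy; have hx : x \in bundle A (A x) by rewrite inE.
  have hy : y \in bundle A (A x) by rewrite inE hxy.
  have := hsm _ _ hx; move/setP/(_ y); rewrite !inE hxy eqxx andbT => /negbFE/eqP //.
have hsub : [set A x | x in [set: 'I_m]] \subset [set~ i].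
  apply/subsetP => _ /imsetP[x _ ->]; rewrite !inE; apply/eqP => e.
  by have := hno x; rewrite e eqxx.
have := subset_leq_card hsub; rewrite card_imset // cardsC1 cardsT !card_ord.
lia.
Qed.

Lemma part1 (R : realType) m n (v : {set 'I_m} -> R) (hn : (0 < n)%N) (hmn : (n <= m)%N) :
  monotone_valuation v -> (n`! <= num_EFX (fun _ : 'I_n => v))%N.
Proof.
move=> hv; have [A [hefx hsurj]] := exists_good hn hmn hv.
pose f (s : {perm 'I_n}) : allocation m n := [ffun g => s (A g)].
have finj : injective f.
  move=> s t /ffunP hst; apply/permP => k; have [g <-] := hsurj k.
  by have := hst g; rewrite !ffunE.
have hb : forall s k, bundle (f s) k = bundle A ((s^-1)%g k).
  move=> s k; apply/setP => x; rewrite !inE ffunE.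
  by apply/eqP/eqP => [<-|->]; rewrite ?permK ?permKV.
rewrite /num_EFX -card_Sn -cardsT -(card_imset _ finj).
apply: subset_leq_card; apply/subsetP => _ /imsetP[s _ ->]; rewrite inE.
apply/forallP => i; apply/forallP => j; apply/forallP => g; apply/implyP.
by rewrite !hb; apply: hefx.
Qed.

Definition Big m k : {set 'I_m} := [set g : 'I_m | (g < k)%N].
Definition v2 (R : realType) m k (S : {set 'I_m}) : R := (#|S :&: Big m k|)%:R.

Lemma v2_add (R : realType) m k : additive_valuation (@v2 R m k).
Proof.
exists (fun g : 'I_m => (((g < k)%N : nat)%:R : R)); split.
  by move=> g; rewrite ler0n.
move=> S; rewrite /v2 -natr_sum; congr _%:R.
rewrite (eq_bigr (fun g : 'I_m => if (g < k)%N then 1%N else 0%N)); last by move=> g _; case: ltnP.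
rewrite -big_mkcondr sum1_card; apply: eq_card => g; by rewrite !inE.
Qed.

Lemma v2_mono (R : realType) m k : monotone_valuation (@v2 R m k).
Proof.
split; first by rewrite /v2 set0I cards0.
by move=> S T hST; rewrite /v2 ler_nat subset_leq_card // setSI.
Qed.

Lemma minn_lt m n (hn : (0 < n)%N) (g : 'I_m) : (minn g n.-1 < n)%N.
Proof. lia. Qed.

Lemma part2_sub (R : realType) m n (hn : (0 < n)%N) (hmn : (n <= m)%N) (A : allocation m n) :
  EFXb (fun _ : 'I_n => @v2 R m n.-1) A ->
  A \in [set [ffun g => s (Ordinal (minn_lt hn g))] | s : {perm 'I_n}].
Proof.
move=> hE.
have efx : forall i j g, g \in bundle A j ->
    (#|(bundle A j :\ g) :&: Big m n.-1| <= #|bundle A i :&: Big m n.-1|)%N.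
  move=> i j g hg.
  by move: hE => /forallP/(_ i)/forallP/(_ j)/forallP/(_ g)/implyP/(_ hg); rewrite ler_nat.
have [k0 hk0] : exists k0, k0 \notin [set A x | x in Big m n.-1].
  apply/existsP; rewrite -negb_forall; apply/negP => /forallP hall.
  have : [set: 'I_n] \subset [set A x | x in Big m n.-1].
    by apply/subsetP => k _; apply: hall.
  move/subset_leq_card; rewrite cardsT card_ord => h.
  have h2 := leq_imset_card A (Big m n.-1).
  have h3 : (#|Big m n.-1| <= n.-1)%N.
    have hsub : Big m n.-1 \subset [set widen_ord (leq_trans (leq_pred n) hmn) t | t : 'I_n.-1].
      apply/subsetP => g; rewrite inE => hg; apply/imsetP.
      by exists (Ordinal hg) => //; apply: val_inj.
    apply: (leq_trans (subset_leq_card hsub)); apply: (leq_trans (leq_imset_card _ _)).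
    by rewrite ?cardsT ?card_ord.
  move: (hn) h h2 h3; move: #|_| #|_| => a b; lia.
have hF : forall g h, A g = A h -> h \in Big m n.-1 -> g = h.
  move=> g h hgh hB; apply/eqP/negPn/negP => hne.
  have hg : g \in bundle A (A g) by rewrite inE.
  have := efx k0 _ _ hg.
  have -> : bundle A k0 :&: Big m n.-1 = set0.
    apply/setP => x; rewrite !inE; apply/negP => /andP[/eqP hx hxB].
    by move/negP: hk0; apply; rewrite -hx; apply: imset_f; rewrite inE.
  rewrite cards0 leqn0 cards_eq0 => /eqP/setP/(_ h).
  by move: hB; rewrite !inE hgh eqxx eq_sym hne => ->.
have hm1 : (n.-1 < m)%N by lia.
pose sf (t : 'I_n) := A (widen_ord hmn t).
have sinj : injective sf.
  move=> t t' /= e.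
  have hb : forall u : 'I_n, (u < n.-1)%N -> widen_ord hmn u \in Big m n.-1.
    by move=> u hu; rewrite inE.
  case: (ltnP t n.-1) => ht.
    by have := hF _ _ (esym e) (hb _ ht) => /(congr1 val) /= /val_inj.
  case: (ltnP t' n.-1) => ht'.
    by have := hF _ _ e (hb _ ht') => /(congr1 val) /= /val_inj.
  apply: ord_inj; have := ltn_ord t; have := ltn_ord t'; lia.
apply/imsetP; exists (perm sinj) => //; apply/ffunP => g; rewrite ffunE permE /sf.
case hg: (g < n.-1)%N.
  by congr (A _); apply: ord_inj => /=; lia.
pose u := ((perm sinj)^-1)%g (A g).
have hu : sf u = A g by rewrite -[sf u]permE permKV.
case: (ltnP u n.-1) => hu1.
  have hw : widen_ord hmn u \in Big m n.-1 by rewrite inE.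
  have e := hF _ _ (esym hu) hw.
  by move: hg; rewrite e /=; lia.
rewrite -hu /sf; congr (A _); apply: ord_inj => /=; have := ltn_ord u; lia.
Qed.

Theorem theorem9 (R : realType) (m n : nat) (hn : (0 < n)%N) (hmn : (n <= m)%N) :
  (forall v : {set 'I_m} -> R, monotone_valuation v ->
     (n`! <= num_EFX (fun _ : 'I_n => v))%N)
  /\
  (exists v : {set 'I_m} -> R, additive_valuation v /\
     num_EFX (fun _ : 'I_n => v) = n`!).
Proof.
split; first by move=> v hv; apply: part1.
exists (@v2 R m n.-1); split; first exact: v2_add.
apply/eqP; rewrite eqn_leq part1 ?andbT //; last exact: v2_mono.
rewrite -card_Sn -cardsT /num_EFX.
apply: (leq_trans _ (leq_imset_card (fun s : {perm 'I_n} => [ffun g => s (Ordinal (minn_lt hn g))]) _)).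
apply: subset_leq_card; apply/subsetP => A; rewrite inE => hA.
have := part2_sub hn hmn hA; case/imsetP => s _ ->; exact: imset_f (in_setT s).
Qed.
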